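(* For positive reals $\gamma,\sigma\le 1$, let $f_p$ be a $(\gamma,\sigma)$-distance over $\mathbb{R}^d$ scaled about a point $p\in\mathbb{R}^d$. Then there exists $\tau$, depending only on $\gamma$ and $\sigma$, such that $f_p$ is $\tau$-admissible, i.e. $\|\nabla f_p(x)\|\,\|x-p\|\le\tau f_p(x)$ and $\|\nabla^2 f_p(x)\|\,\|x-p\|^2\le\tau^2 f_p(x)$ at every point $x\ne p$ where $f_p$ is twice differentiable.
   Context: Given a closed convex body $K$ with the origin in its interior, the scaling distance about $p$ is $f_p(x)=0$ if $x=p$ and otherwise the smallest $r>0$ with $(x-p)/r\in K$. $K$ is centrally $\gamma$-fat if there are Euclidean balls $B\subseteq K\subseteq B'$ centered at the origin with $\mathrm{radius}(B)/\mathrm{radius}(B')\ge\gamma$; $K$ is $\sigma$-smooth if every boundary point $x$ of $K$ lies on the boundary of some closed Euclidean ball of diameter $\sigma\cdot\mathrm{diam}(K)$ contained in $K$. $f_p$ is a $(\gamma,\sigma)$-distance if its unit ball $K$ is centrally $\gamma$-fat and $\sigma$-smooth. Norms are Euclidean (spectral for matrices). *)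

(* Defs.v *)
From mathcomp Require Import all_boot all_order all_algebra.
From mathcomp Require Import boolp classical_sets reals.
Set Implicit Arguments. Unset Strict Implicit. Unset Printing Implicit Defensive.
Import Order.TTheory GRing.Theory Num.Theory.
Local Open Scope classical_set_scope.
Local Open Scope ring_scope.

Section Defs.
Context {R : realType} {d : nat}.
Notation vec := 'rV[R]_d.

Definition edot (u v : vec) : R := \sum_(i < d) u 0 i * v 0 i.
Definition enorm (u : vec) : R := Num.sqrt (edot u u).

Definition specnorm (H : 'M[R]_d) : R :=
  sup [set r | exists v : vec, enorm v <= 1 /\ r = enorm (v *m H)].

Definition cball (c : vec) (r : R) : set vec := [set y | enorm (y - c) <= r].

Definition is_closed_set (K : set vec) : Prop :=
  forall x, (forall e, 0 < e -> exists y, K y /\ enorm (y - x) < e) -> K x.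
Definition is_convex_set (K : set vec) : Prop :=
  forall x y (t : R), K x -> K y -> 0 <= t <= 1 -> K (t *: x + (1 - t) *: y).
Definition interior_pt (K : set vec) (x : vec) : Prop :=
  exists e, 0 < e /\ forall y, enorm (y - x) < e -> K y.
Definition boundary_pt (K : set vec) (x : vec) : Prop :=
  K x /\ ~ interior_pt K x.
Definition on_sphere (c : vec) (r : R) (x : vec) : Prop := enorm (x - c) = r.

Definition diam (K : set vec) : R :=
  sup [set r | exists x y, K x /\ K y /\ r = enorm (x - y)].

Definition convex_body0 (K : set vec) : Prop :=
  is_closed_set K /\ is_convex_set K /\ interior_pt K 0.

Definition centrally_fat (gamma : R) (K : set vec) : Prop :=
  exists r r', 0 < r /\ 0 < r' /\ cball 0 r `<=` K /\ K `<=` cball 0 r'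
               /\ gamma <= r / r'.

Definition smooth_body (sigma : R) (K : set vec) : Prop :=
  forall x, boundary_pt K x ->
    exists c, cball c (sigma * diam K / 2) `<=` K /\ on_sphere c (sigma * diam K / 2) x.

Definition scaling_dist (K : set vec) (p : vec) (x : vec) : R :=
  if x == p then 0 else inf [set r | 0 < r /\ K (r^-1 *: (x - p))].

Definition has_gradient (f : vec -> R) (x g : vec) : Prop :=
  forall e, 0 < e -> exists delta, 0 < delta /\
    forall y, enorm (y - x) < delta ->
      `|f y - f x - edot g (y - x)| <= e * enorm (y - x).

Definition has_jacobian (G : vec -> vec) (x : vec) (H : 'M[R]_d) : Prop :=
  forall e, 0 < e -> exists delta, 0 < delta /\
    forall y, enorm (y - x) < delta ->
      enorm (G y - G x - (y - x) *m H) <= e * enorm (y - x).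

Definition twice_diff_at (f : vec -> R) (x : vec) (G : vec -> vec) (H : 'M[R]_d) : Prop :=
  (exists delta, 0 < delta /\ forall y, enorm (y - x) < delta -> has_gradient f y (G y))
  /\ has_jacobian G x H.

End Defs.

(* Main.v *)
Require Import Defs.
From mathcomp Require Import all_boot all_order all_algebra.
From mathcomp Require Import boolp classical_sets reals.
From mathcomp Require Import ring lra.
Set Implicit Arguments. Unset Strict Implicit. Unset Printing Implicit Defensive.
Import Order.TTheory GRing.Theory Num.Theory.
Local Open Scope classical_set_scope.
Local Open Scope ring_scope.

Section Vec.
Context {R : realType} {d : nat}.
Notation vec := 'rV[R]_d.
Implicit Types u v w : vec.

Lemma edotC u v : edot u v = edot v u.
Proof. by apply: eq_bigr => i _; rewrite mulrC. Qed.
Lemma edotDl u v w : edot (u + v) w = edot u w + edot v w.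
Proof. by rewrite /edot -big_split; apply: eq_bigr => i _; rewrite mxE mulrDl. Qed.
Lemma edotZl a u v : edot (a *: u) v = a * edot u v.
Proof. by rewrite /edot mulr_sumr; apply: eq_bigr => i _; rewrite mxE mulrA. Qed.
Lemma edotNl u v : edot (- u) v = - edot u v.
Proof. by rewrite -scaleN1r edotZl mulN1r. Qed.
Lemma edotBl u v w : edot (u - v) w = edot u w - edot v w.
Proof. by rewrite edotDl edotNl. Qed.
Lemma edotDr u v w : edot w (u + v) = edot w u + edot w v.
Proof. by rewrite edotC edotDl !(edotC w). Qed.
Lemma edotZr a u v : edot v (a *: u) = a * edot v u.
Proof. by rewrite edotC edotZl edotC. Qed.
Lemma edotNr u v : edot v (- u) = - edot v u.
Proof. by rewrite edotC edotNl edotC. Qed.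
Lemma edotBr u v w : edot w (u - v) = edot w u - edot w v.
Proof. by rewrite edotDr edotNr. Qed.
Lemma edot0l u : edot 0 u = 0.
Proof. by rewrite -(scale0r (0:vec)) edotZl mul0r. Qed.
Lemma edot0r u : edot u 0 = 0.
Proof. by rewrite edotC edot0l. Qed.
Lemma edot_ge0 u : 0 <= edot u u.
Proof. by apply: sumr_ge0 => i _; rewrite -expr2 sqr_ge0. Qed.
Lemma edot_eq0 u : edot u u = 0 -> u = 0.
Proof.
move=> /eqP; rewrite psumr_eq0 => [/allP H|i _]; last by rewrite -expr2 sqr_ge0.
apply/matrixP => i j; rewrite (ord1 i) mxE.
have /H : j \in index_enum 'I_d by rewrite mem_index_enum.
by rewrite /= mulf_eq0 orbb => /eqP.
Qed.
Lemma enorm_ge0 u : 0 <= enorm u.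
Proof. exact: sqrtr_ge0. Qed.
Lemma enorm_sq u : enorm u ^+ 2 = edot u u.
Proof. by rewrite sqr_sqrtr // edot_ge0. Qed.
Lemma enormZ a u : enorm (a *: u) = `|a| * enorm u.
Proof. by rewrite /enorm edotZl edotZr mulrA -expr2 sqrtrM ?sqr_ge0 // sqrtr_sqr. Qed.
Lemma enormN u : enorm (- u) = enorm u.
Proof. by rewrite -scaleN1r enormZ normrN1 mul1r. Qed.
Lemma enorm0 : enorm (0 : vec) = 0.
Proof. by rewrite /enorm edot0l sqrtr0. Qed.
Lemma enorm_eq0 u : enorm u = 0 -> u = 0.
Proof. by move=> H; apply: edot_eq0; rewrite -enorm_sq H expr2 mul0r. Qed.
Lemma enormB u v : enorm (u - v) = enorm (v - u).
Proof. by rewrite -enormN opprB. Qed.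

Lemma CS2 u v : edot u v ^+ 2 <= edot u u * edot v v.
Proof.
have [v0|] := eqVneq v 0; first by rewrite v0 edot0r edot0l expr2 !mulr0.
move=> vn0.
have hv : 0 < edot v v.
  by rewrite lt_def edot_ge0 andbT; apply/eqP => /edot_eq0; apply/eqP.
have := edot_ge0 (edot v v *: u - edot u v *: v).
rewrite !(edotBl, edotBr, edotZl, edotZr) (edotC v u).
move=> H.
have : 0 <= edot v v * (edot v v * edot u u - edot u v ^+ 2) by nra.
by rewrite pmulr_rge0 // subr_ge0 mulrC.
Qed.

Lemma CS u v : `|edot u v| <= enorm u * enorm v.
Proof.
rewrite -ler_sqr ?nnegrE ?normr_ge0 ?mulr_ge0 ?enorm_ge0 //.
by rewrite real_normK ?num_real // exprMn !enorm_sq CS2.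
Qed.
Lemma CS' u v : edot u v <= enorm u * enorm v.
Proof. exact: le_trans (ler_norm _) (CS u v). Qed.

Lemma enormD u v : enorm (u + v) <= enorm u + enorm v.
Proof.
rewrite -ler_sqr ?nnegrE ?addr_ge0 ?enorm_ge0 //.
rewrite enorm_sq edotDl !edotDr (edotC v u) sqrrD !enorm_sq.
have := CS' u v; lra.
Qed.
End Vec.

Section Scal.
Context {R : realType} {d : nat}.
Notation vec := 'rV[R]_d.
Implicit Types (u v w p x : vec) (K : set vec).

Definition SS (K : set vec) w := [set s : R | 0 < s /\ K (s^-1 *: w)].

Lemma sd_def K p x : x != p -> scaling_dist K p x = inf (SS K (x - p)).
Proof. by rewrite /scaling_dist => /negbTE ->. Qed.

Lemma sd_p K p : scaling_dist K p p = 0.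
Proof. by rewrite /scaling_dist eqxx. Qed.

Lemma SS_lb K w : has_lbound (SS K w).
Proof. by exists 0 => s [/ltW]. Qed.

Lemma sd_le K p x s : 0 < s -> K (s^-1 *: (x - p)) -> scaling_dist K p x <= s.
Proof.
move=> s0 Ks; have [->|xp] := eqVneq x p; first by rewrite sd_p ltW.
by rewrite sd_def //; apply: ge_inf; [exact: SS_lb | split].
Qed.

Lemma SS_ne K w r : 0 < r -> cball 0 r `<=` K -> w != 0 -> SS K w !=set0.
Proof.
move=> r0 Kr w0; have nw : 0 < enorm w.
  by rewrite lt_def enorm_ge0 andbT; apply/eqP => /enorm_eq0; apply/eqP.
exists (enorm w / r); split; first by rewrite divr_gt0.
apply: Kr; rewrite /cball /= subr0 enormZ invfM invrK ger0_norm; last first.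
  by rewrite mulr_ge0 ?ltW // invr_gt0.
by rewrite mulrAC mulVf ?mul1r // gt_eqF.
Qed.

Lemma sd_ge K p x a r : 0 < r -> cball 0 r `<=` K -> x != p ->
  (forall s, 0 < s -> K (s^-1 *: (x - p)) -> a <= s) -> a <= scaling_dist K p x.
Proof.
move=> r0 Kr xp H; rewrite sd_def //; apply: lb_le_inf.
  by apply: (SS_ne r0 Kr); rewrite subr_eq0.
by move=> s [s0 Ks]; apply: H.
Qed.

Lemma sd_gt0 K p x r r' : 0 < r -> cball 0 r `<=` K -> 0 < r' -> K `<=` cball 0 r' ->
  x != p -> enorm (x - p) / r' <= scaling_dist K p x.
Proof.
move=> r0 Kr r'0 Kr' xp; apply: (sd_ge r0 Kr xp) => s s0 /Kr'.
rewrite /cball /= subr0 enormZ ger0_norm; last by rewrite invr_ge0 ltW.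
by rewrite mulrC ler_pdivrMr // => h; rewrite ler_pdivrMr // mulrC.
Qed.

End Scal.

Section Scal2.
Context {R : realType} {d : nat}.
Notation vec := 'rV[R]_d.
Implicit Types (u v w p x : vec) (K : set vec).

Lemma enorm_gt0 u : u != 0 -> 0 < enorm u.
Proof. by move=> u0; rewrite lt_def enorm_ge0 andbT; apply/eqP => /enorm_eq0; apply/eqP. Qed.

Lemma inv_diff (t s : R) : 0 < t -> t <= s -> `|s^-1 - t^-1| <= (s - t) / t ^+ 2.
Proof.
move=> t0 ts; have s0 : 0 < s by apply: lt_le_trans ts.
have -> : s^-1 - t^-1 = (t - s) / (s * t) by field; apply/andP; split; rewrite gt_eqF.
rewrite normrM normrV ?unitfE ?mulf_neq0 ?gt_eqF // normrM.
rewrite (gtr0_norm s0) (gtr0_norm t0) distrC ger0_norm ?subr_ge0 // ler_wpM2l ?subr_ge0 // lef_pV2 ?posrE ?mulr_gt0 ?exprn_gt0 //.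
by rewrite expr2 ler_pM2r.
Qed.

End Scal2.

Section Scal3.
Context {R : realType} {d : nat}.
Notation vec := 'rV[R]_d.
Implicit Types (u v w p x : vec) (K : set vec).

Variables (K : set vec) (r r' : R).
Hypotheses (r0 : 0 < r) (Kr : cball 0 r `<=` K) (r'0 : 0 < r') (Kr' : K `<=` cball 0 r').

Lemma sd_pos p x : x != p -> 0 < scaling_dist K p x.
Proof.
move=> xp; apply: lt_le_trans (sd_gt0 r0 Kr r'0 Kr' xp).
by rewrite divr_gt0 // enorm_gt0 // subr_eq0.
Qed.

Lemma sd_in p x : is_closed_set K -> x != p ->
  K ((scaling_dist K p x)^-1 *: (x - p)).
Proof.
move=> cK xp; set t := scaling_dist K p x.
have t0 : 0 < t := sd_pos xp.
apply: cK => e e0.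
set w := x - p.
have hw := enorm_ge0 w.
set eps := e * t ^+ 2 / (enorm w + 1).
have eps0 : 0 < eps by rewrite divr_gt0 ?mulr_gt0 ?exprn_gt0 // ltr_wpDl.
have hinf : has_inf (SS K w) by split; [apply: (SS_ne r0 Kr); rewrite subr_eq0|exact: SS_lb].
have [s [s0 Ks] st] := inf_adherent eps0 hinf.
have ts : t <= s by rewrite /t sd_def //; apply: ge_inf => //; exact: SS_lb.
rewrite /w -sd_def // -/t in st.
exists (s^-1 *: w); split => //.
rewrite -scalerBl enormZ.
have h1 := inv_diff t0 ts.
have h2 : (s - t) / t ^+ 2 <= e / (enorm w + 1).
  rewrite ler_pdivrMr ?exprn_gt0 // mulrAC -/eps; apply: ltW; lra.
have h3 : e / (enorm w + 1) * enorm w < e.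
  rewrite mulrAC ltr_pdivrMr ?ltr_wpDl //; nra.
apply: le_lt_trans h3; apply: ler_wpM2r => //; exact: le_trans h1 h2.
Qed.

Lemma sd_bd p x : x != p ->
  ~ interior_pt K ((scaling_dist K p x)^-1 *: (x - p)).
Proof.
move=> xp [e [e0 H]]; set t := scaling_dist K p x.
have t0 : 0 < t := sd_pos xp.
set z := t^-1 *: (x - p).
have hz := enorm_ge0 z.
set eta := e / (2 * (enorm z + 1)).
have eta0 : 0 < eta by rewrite divr_gt0 // mulr_gt0 // ltr_wpDl.
have Kz : K ((1 + eta) *: z).
  apply: H; rewrite scalerDl scale1r addrAC subrr add0r enormZ gtr0_norm //.
  rewrite /eta mulrAC ltr_pdivrMr ?mulr_gt0 ?ltr_wpDl //; nra.
have : t <= t / (1 + eta).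
  apply: sd_le; first by rewrite divr_gt0 // ltr_wpDl.
  by rewrite invfM invrK mulrC -scalerA.
rewrite ler_pdivlMr ?ltr_wpDl //; nra.
Qed.

End Scal3.

Section Geo.
Context {R : realType} {d : nat}.
Notation vec := 'rV[R]_d.
Implicit Types (u v w p x z c : vec) (K : set vec).

Lemma support K z c (rho : R) : is_convex_set K -> 0 < rho -> cball c rho `<=` K ->
  enorm (z - c) = rho -> ~ interior_pt K z ->
  forall v, K v -> edot (z - c) v <= edot (z - c) z.
Proof.
move=> cvx rho0 B zc nint v Kv; rewrite leNgt; apply/negP => hlt.
set beta := edot (z - c) (v - z).
have b0 : 0 < beta by rewrite /beta edotBr subr_gt0.
set a := edot (c - v) (c - v).
have a0 : 0 <= a := edot_ge0 _.
set lam := Num.min (1/2) (beta / (a + 1)).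
have l0 : 0 < lam.
  rewrite lt_min; apply/andP; split; first lra.
  by apply: divr_gt0 => //; lra.
have l1 : lam <= 1/2 by rewrite ge_min lexx.
have l2 : lam * (a + 1) <= beta.
  by rewrite -ler_pdivlMr ?ltr_wpDl // ge_min lexx orbT.
set D := (z - c) + lam *: (c - v).
have hD2 : enorm D ^+ 2 < ((1 - lam) * rho) ^+ 2.
  have e1 : c - v = - (z - c) - (v - z) by apply/rowP => i; rewrite !mxE; ring.
  have e2 : edot (z - c) (z - c) = rho ^+ 2 by rewrite -enorm_sq zc.
  have e3 : edot (z - c) (c - v) = - rho ^+ 2 - beta.
    by rewrite e1 edotBr edotNr e2.
  have key : forall (m k : vec) (l : R), edot (m + l *: k) (m + l *: k)
      = edot m m + 2 * l * edot m k + l ^+ 2 * edot k k.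
    move=> m k l; rewrite edotDl !edotDr !edotZl !edotZr (edotC k m); ring.
  rewrite enorm_sq /D key e2 e3 -/a.
  have h : lam * (lam * (a + 1)) <= lam * beta by rewrite ler_pM2l.
  have h2 : 0 < lam * lam by apply: mulr_gt0.
  have h3 : 0 <= lam * lam * rho ^+ 2 by apply: mulr_ge0; [lra|apply: sqr_ge0].
  nra.
have hD : enorm D < (1 - lam) * rho.
  by rewrite -ltr_sqr ?nnegrE ?enorm_ge0 // mulr_ge0 ?ltW //; lra.
apply: nint; exists ((1 - lam) * rho - enorm D); split; first by rewrite subr_gt0.
move=> q hq.
have l1' : 0 < 1 - lam by lra.
set b := (1 - lam)^-1 *: (q - lam *: v).
have Kb : K b.
  apply: B; rewrite /cball /=.
  have -> : b - c = (1 - lam)^-1 *: ((q - z) + D).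
    rewrite /b /D; apply/rowP => i; rewrite !mxE; field; lra.
  rewrite enormZ gtr0_norm ?invr_gt0 // ler_pdivrMl //.
  have := enormD (q - z) D; lra.
have -> : q = (1 - lam) *: b + (1 - (1 - lam)) *: v.
  rewrite /b; apply/rowP => i; rewrite !mxE; field; lra.
apply: cvx => //; lra.
Qed.

Lemma support_r K z c (rho r : R) : is_convex_set K -> 0 < rho -> cball c rho `<=` K ->
  enorm (z - c) = rho -> ~ interior_pt K z -> 0 <= r -> cball 0 r `<=` K ->
  r * rho <= edot (z - c) z.
Proof.
move=> cvx rho0 B zc nint r0 Kr.
have Kv : K ((r / rho) *: (z - c)).
  apply: Kr; rewrite /cball /= subr0 enormZ zc ger0_norm; last first.
    by apply: divr_ge0 => //; apply: ltW.
  by rewrite divfK ?gt_eqF.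
have := support cvx rho0 B zc nint Kv.
by rewrite edotZr -enorm_sq zc expr2 mulrA divfK ?gt_eqF.
Qed.

End Geo.

Lemma edotDD {R : realType} {d : nat} (u v : 'rV[R]_d) :
  edot (u + v) (u + v) = edot u u + 2 * edot u v + edot v v.
Proof. rewrite edotDl !edotDr (edotC v u); ring. Qed.

Section Quad.
Context {R : realType} {d : nat}.
Notation vec := 'rV[R]_d.
Implicit Types (u v w q x z c : vec).

Definition AA (r r' : R) := r + 2 * r'.
Definition LL (r r' sigma T : R) := 4 * AA r r' ^+ 2 / (T * sigma * r ^+ 4).
Definition D0 (r r' sigma T : R) := Num.min (T * r / 4) (2 / (r * LL r r' sigma T)).

Lemma LL_gt0 (r r' sigma T : R) : 0 < r -> 0 < r' -> 0 < sigma -> 0 < T ->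
  0 < LL r r' sigma T.
Proof.
move=> r0 r'0 s0 T0.
rewrite /LL divr_gt0 // ?mulr_gt0 ?exprn_gt0 //.
all: by rewrite /AA addr_gt0 // mulr_gt0.
Qed.

Lemma quad (K : set vec) (p : vec) (r r' sigma T : R) :
  convex_body0 K -> 0 < r -> cball 0 r `<=` K ->
  0 < r' -> K `<=` cball 0 r' -> 0 < sigma ->
  smooth_body sigma K -> 0 < T -> 2 * r <= diam K ->
  forall y, T / 2 <= scaling_dist K p y -> exists n : vec,
  enorm n <= 1 / r /\ (forall q, scaling_dist K p y + edot n (q - y) <= scaling_dist K p q) /\
  (forall h, enorm h <= D0 r r' sigma T -> scaling_dist K p (y + h) <=
      scaling_dist K p y + edot n h + LL r r' sigma T / 2 * enorm h ^+ 2).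
Proof.
move=> cb r0 Kr r'0 Kr' s0 sm T0 hdiam y Ty.
have yp : y != p.
  by apply/eqP => yp; move: Ty; rewrite yp sd_p => Ty; lra.
case: cb => cK [cvK _].
set t := scaling_dist K p y.
have t0 : 0 < t := sd_pos r0 Kr r'0 Kr' yp.
set z := t^-1 *: (y - p).
have Kz : K z := sd_in r0 Kr r'0 Kr' cK yp.
have nint : ~ interior_pt K z := sd_bd r0 Kr r'0 Kr' yp.
have [c [Bc zc]] := sm z (conj Kz nint).
set rho := sigma * diam K / 2.
move: Bc zc; rewrite -/rho => Bc zc; rewrite /on_sphere in zc.
have rho_ge : sigma * r <= rho by rewrite /rho -mulrA ler_pM2l //; lra.
have rho0 : 0 < rho by apply: lt_le_trans rho_ge; apply: mulr_gt0.
set beta := edot (z - c) z.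
have hbeta : r * rho <= beta := support_r cvK rho0 Bc zc nint (ltW r0) Kr.
have beta0 : 0 < beta by apply: lt_le_trans hbeta; apply: mulr_gt0.
set n := beta^-1 *: (z - c).
have ytz : y - p = t *: z by rewrite /z scalerA divff ?gt_eqF // scale1r.
have nyp : edot n (y - p) = t.
  by rewrite ytz /n edotZl edotZr -/beta mulrCA mulVf ?gt_eqF // mulr1.
have hn : enorm n * r <= 1.
  by rewrite /n enormZ zc gtr0_norm ?invr_gt0 // -mulrA mulrC ler_pdivrMr // mul1r mulrC.
have hz : enorm z <= r'.
  by have := Kr' z Kz; rewrite /cball /= subr0.
have low : forall q, edot n (q - p) <= scaling_dist K p q.
  move=> q; have [->|qp] := eqVneq q p; first by rewrite subrr edot0r sd_p.
  apply: (sd_ge r0 Kr qp) => s s0' Ks.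
  have := support cvK rho0 Bc zc nint Ks.
  rewrite edotZr -/beta /n edotZl => H.
  rewrite -(ler_pM2l beta0) mulrA divff ?gt_eqF // mul1r.
  have := ler_wpM2l (ltW s0') H.
  by rewrite mulrA mulfV ?gt_eqF // mul1r mulrC.
exists n; split; first by rewrite -ler_pdivlMr // in hn.
split.
  move=> q; have := low q.
  have -> : q - p = (q - y) + (y - p) by apply/rowP => i; rewrite !mxE; ring.
  rewrite edotDr nyp; lra.
move=> h hh.
set a := enorm h.
have a0 : 0 <= a := enorm_ge0 h.
have L0 := LL_gt0 r0 r'0 s0 T0.
set L := LL r r' sigma T.
have [ha1 ha2] : a <= T * r / 4 /\ a <= 2 / (r * L).
  by move: hh; rewrite le_min => /andP.
have hLa : L * a * r <= 2.
  have -> : L * a * r = a * (r * L) by ring.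
  have rL : 0 < r * L by apply: mulr_gt0.
  by move: ha2; rewrite ler_pdivlMr.
have hnh : `|edot n h| * r <= a.
  have h1 := CS n h; rewrite -/a in h1.
  have h2 : `|edot n h| * r <= enorm n * a * r by rewrite ler_pM2r.
  apply: le_trans h2 _; rewrite mulrAC; have := enorm_ge0 n; nra.
set del := edot n h + L / 2 * a ^+ 2.
set s := t + del.
have hdel : r * `|del| <= 2 * a.
  have h1 : `|del| <= `|edot n h| + L / 2 * a ^+ 2.
    apply: le_trans (ler_normD _ _) _; rewrite lerD2l ger0_norm //.
    by apply: mulr_ge0; [apply: divr_ge0 => //; apply: ltW | apply: sqr_ge0].
  have h2 : r * `|del| <= r * (`|edot n h| + L / 2 * a ^+ 2) by rewrite ler_pM2l.
  apply: le_trans h2 _.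
  have -> : r * (`|edot n h| + L / 2 * a ^+ 2) = `|edot n h| * r + (L * a * r) * a / 2.
    by rewrite expr2; field.
  have : (L * a * r) * a <= 2 * a by rewrite ler_wpM2r.
  lra.
have hs : T / 4 <= s.
  have h1 : - `|edot n h| <= del.
    rewrite /del; have := ler_norm (- edot n h); rewrite normrN.
    have : 0 <= L / 2 * a ^+ 2.
      by apply: mulr_ge0; [apply: divr_ge0 => //; apply: ltW | apply: sqr_ge0].
    lra.
  have h2 : r * (T / 4) <= r * s.
    have : r * (- `|edot n h|) <= r * del by rewrite ler_pM2l.
    have : r * t >= r * (T / 2) by rewrite ler_pM2l.
    rewrite /s; nra.
  by rewrite ler_pM2l in h2.
have sp : 0 < s by apply: lt_le_trans hs; apply: divr_gt0.
rewrite -addrA -/del -/s.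
apply: sd_le => //.
apply: Bc; rewrite /cball /=.
have E : y + h - p = t *: z + h.
  by rewrite -ytz; apply/rowP => i; rewrite !mxE; ring.
set m := z - c.
set g := h - (s - t) *: z.
have E2 : s^-1 *: (y + h - p) - c = s^-1 *: (s *: m + g).
  rewrite E /m /g; apply/rowP => i; rewrite !mxE; field; by rewrite !gt_eqF.
rewrite E2 enormZ gtr0_norm ?invr_gt0 // ler_pdivrMl //.
have hg : r * enorm g <= AA r r' * a.
  have h1 : enorm g <= a + `|del| * r'.
    apply: le_trans (enormD _ _) _; rewrite enormN enormZ.
    have -> : s - t = del by rewrite /s; ring.
    by rewrite lerD2l ler_wpM2l.
  have h2 : r * enorm g <= r * (a + `|del| * r') by rewrite ler_pM2l.
  apply: le_trans h2 _; rewrite /AA.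
  have : r * `|del| * r' <= 2 * a * r' by rewrite ler_wpM2r // ltW.
  nra.
have hmg : edot m g = - (beta * (L / 2 * a ^+ 2)).
  rewrite /g edotBr edotZr.
  have -> : s - t = del by rewrite /s; ring.
  rewrite /del /n edotZl -/m.
  have -> : edot m z = beta by [].
  field; by rewrite gt_eqF.
have hmm : edot m m = rho ^+ 2 by rewrite -enorm_sq zc.
have hgg : edot g g = enorm g ^+ 2 by rewrite enorm_sq.
have hL : L * (T * sigma * r ^+ 4) = 4 * AA r r' ^+ 2.
  rewrite /L /LL; field.
  by rewrite !gt_eqF.
have key : enorm g ^+ 2 <= s * beta * L * a ^+ 2.
  have e1 : (r * enorm g) ^+ 2 <= (AA r r' * a) ^+ 2.
    have hAA : 0 <= AA r r' by rewrite /AA addr_ge0 ?mulr_ge0 // ltW.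
    have r0' : 0 <= r by apply: ltW.
    rewrite ler_sqr ?nnegrE ?mulr_ge0 ?enorm_ge0 //.
  have e2 : sigma * r ^+ 2 <= beta.
    apply: le_trans hbeta; rewrite expr2 mulrA [sigma * r]mulrC -mulrA.
    by rewrite ler_pM2l.
  have e3 : T / 4 * (sigma * r ^+ 2) <= s * beta.
    by apply: ler_pM => //; [lra | apply: mulr_ge0; [lra | apply: sqr_ge0]].
  have e4 : (AA r r') ^+ 2 <= s * beta * L * r ^+ 2.
    have : T / 4 * (sigma * r ^+ 2) * (L * r ^+ 2) <= s * beta * (L * r ^+ 2).
      by rewrite ler_pM2r // mulr_gt0 // exprn_gt0.
    have -> : T / 4 * (sigma * r ^+ 2) * (L * r ^+ 2) = L * (T * sigma * r ^+ 4) / 4.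
      have -> : r ^+ 4 = r ^+ 2 * r ^+ 2 by rewrite -exprD.
      by field.
    rewrite hL; lra.
  have e5 : r ^+ 2 * enorm g ^+ 2 <= r ^+ 2 * (s * beta * L * a ^+ 2).
    rewrite -exprMn; apply: le_trans e1 _; rewrite exprMn.
    have := ler_wpM2r (sqr_ge0 a) e4; lra.
  by rewrite ler_pM2l ?exprn_gt0 in e5.
rewrite -ler_sqr ?nnegrE ?enorm_ge0 //; last by apply: mulr_ge0; apply: ltW.
rewrite enorm_sq edotDD !edotZl !edotZr hmm hmg hgg.
have -> : s * (s * rho ^+ 2) + 2 * (s * - (beta * (L / 2 * a ^+ 2)))
  = (s * rho) ^+ 2 - s * beta * L * a ^+ 2 by field.
lra.
Qed.

End Quad.

Section Abs.
Context {R : realType} {d : nat}.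
Notation vec := 'rV[R]_d.
Implicit Types (u v w q x y z c g n : vec).

Lemma addKv y h : y + h - y = h :> vec.
Proof. by rewrite addrC addKr. Qed.

Lemma grad_unique (f : vec -> R) y g n (L D : R) : 0 < D -> 0 <= L ->
  has_gradient f y g ->
  (forall h, enorm h <= D -> f (y + h) <= f y + edot n h + L / 2 * enorm h ^+ 2) ->
  g = n.
Proof.
move=> D0 L0 hg up; apply/eqP; rewrite -subr_eq0; apply/negP => /negP un.
set u := g - n.
set b := enorm u.
have b0 : 0 < b := enorm_gt0 un.
have b4 : 0 < b / 4 by lra.
have [del [del0 Hd]] := hg (b / 4) b4.
set eps := Num.min (del / (2 * b)) (Num.min (D / b) (1 / (2 * L + 1))).
have L1 : 0 < 2 * L + 1 by lra.
have eps0 : 0 < eps.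
  rewrite !lt_min !divr_gt0 ?mulr_gt0 //; lra.
have e1 : eps * b < del.
  have : eps <= del / (2 * b) by rewrite ge_min lexx.
  rewrite ler_pdivlMr ?mulr_gt0 //; nra.
have e2 : eps * b <= D.
  have : eps <= D / b by rewrite !ge_min lexx orbT.
  by rewrite ler_pdivlMr.
have e3 : L * eps <= 1 / 2.
  have : eps <= 1 / (2 * L + 1) by rewrite !ge_min lexx !orbT.
  rewrite ler_pdivlMr // => h; nra.
set h := eps *: u.
have nh : enorm h = eps * b by rewrite /h enormZ gtr0_norm.
have := Hd (y + h); rewrite addKv nh => /(_ e1).
have := up h; rewrite nh => /(_ e2).
have gnh : edot g h - edot n h = eps * b ^+ 2.
  by rewrite -edotBl /h edotZr -/u -enorm_sq.
move=> H1 H2.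
have H3 := ler_norm (- (f (y + h) - f y - edot g h)); rewrite normrN in H3.
have H4 : eps * b ^+ 2 <= b / 4 * (eps * b) + L / 2 * (eps * b) ^+ 2 by lra.
have H5 : eps * b * b <= eps * b * (b / 4 + L * eps * b / 2).
  have -> : eps * b * (b / 4 + L * eps * b / 2) = b / 4 * (eps * b) + L / 2 * (eps * b) ^+ 2.
    by rewrite expr2; field.
  by rewrite -mulrA -expr2.
rewrite ler_pM2l ?mulr_gt0 // in H5.
have : L * eps * b <= b / 2 by rewrite mulrAC; have := ler_wpM2r (ltW b0) e3; lra.
lra.
Qed.

End Abs.

Section Abs2.
Context {R : realType} {d : nat}.
Notation vec := 'rV[R]_d.
Implicit Types (u v w q x y z c g n : vec).

Definition goodpt (f : vec -> R) (L D : R) y n :=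
  (forall q, f y + edot n (q - y) <= f q) /\
  (forall h, enorm h <= D -> f (y + h) <= f y + edot n h + L / 2 * enorm h ^+ 2).

Lemma coco_aux (f : vec -> R) (L D tau : R) x y nx ny : 0 < L -> 0 < tau ->
  L * tau <= 1 -> tau * enorm (ny - nx) <= D ->
  goodpt f L D x nx -> goodpt f L D y ny ->
  tau * enorm (ny - nx) <= enorm (y - x).
Proof.
move=> L0 t0 Lt tD [lx ux] [ly uy].
set u := ny - nx; set b := enorm u.
have b0 : 0 <= b := enorm_ge0 u.
have hb : enorm (tau *: u) <= D by rewrite enormZ gtr0_norm.
have hb' : enorm (- (tau *: u)) <= D by rewrite enormN.
have A1 := lx (y - tau *: u).
have A2 := uy _ hb'.
have A3 := ly (x + tau *: u).
have A4 := ux _ hb.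
rewrite enormN enormZ gtr0_norm // in A2.
rewrite enormZ gtr0_norm // in A4.
have E1 : y - tau *: u - x = (y - x) - tau *: u by apply/rowP => i; rewrite !mxE; ring.
have E2 : x + tau *: u - y = - (y - x) + tau *: u by apply/rowP => i; rewrite !mxE; ring.
rewrite E1 edotBr edotZr in A1.
rewrite E2 edotDr edotNr edotZr in A3.
rewrite edotNr edotZr in A2.
rewrite edotZr in A4.
have P1 : edot ny (y - x) - edot nx (y - x) = edot u (y - x) by rewrite edotBl.
have P2 : edot ny u - edot nx u = b ^+ 2 by rewrite -edotBl enorm_sq.
have CSb : edot u (y - x) <= b * enorm (y - x) := CS' _ _.
have P2' : tau * edot ny u - tau * edot nx u = tau * b ^+ 2 by rewrite -mulrBr P2.
rewrite exprMn in A2 A4.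
have key : 2 * (tau * b ^+ 2) - L * tau ^+ 2 * b ^+ 2 <= b * enorm (y - x).
  rewrite -/b in A2 A4; clear E1 E2; lra.
have key2 : tau * b ^+ 2 <= 2 * (tau * b ^+ 2) - L * tau ^+ 2 * b ^+ 2.
  have : L * tau * (tau * b ^+ 2) <= 1 * (tau * b ^+ 2).
    by apply: ler_wpM2r => //; apply: mulr_ge0; [apply: ltW|apply: sqr_ge0].
  have -> : L * tau ^+ 2 * b ^+ 2 = L * tau * (tau * b ^+ 2) by ring.
  lra.
have [bz|bp] := eqVneq b 0; first by rewrite bz mulr0 enorm_ge0.
have bp' : 0 < b by rewrite lt_def bp b0.
have : b * (tau * b) <= b * enorm (y - x).
  by apply: le_trans key; apply: le_trans key2; rewrite le_eqVlt; apply/orP; left; apply/eqP; ring.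
by rewrite ler_pM2l.
Qed.

Lemma coco (f : vec -> R) (L D : R) x y nx ny : 0 < L -> 0 < D ->
  goodpt f L D x nx -> goodpt f L D y ny -> enorm (y - x) < D ->
  enorm (ny - nx) <= L * enorm (y - x).
Proof.
move=> L0 D0 gx gy yx.
set b := enorm (ny - nx).
have b0 : 0 <= b := enorm_ge0 _.
have [bz|bp] := eqVneq b 0; first by rewrite bz mulr_ge0 ?enorm_ge0 // ltW.
have bp' : 0 < b by rewrite lt_def bp b0.
have [hb|hb] := lerP b (L * D).
  set iL := 1 / L.
  have iL0 : 0 < iL by rewrite divr_gt0.
  have hiL : L * iL = 1 by rewrite /iL mul1r mulfV ?gt_eqF.
  have := coco_aux (tau := iL) L0 iL0 _ _ gx gy.
  rewrite -/b hiL => /(_ (lexx _)).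
  have e2 : iL * b <= D.
    by have := ler_wpM2l (ltW iL0) hb; rewrite mulrA [iL * L]mulrC hiL mul1r.
  move=> /(_ e2) H.
  by have := ler_wpM2l (ltW L0) H; rewrite mulrA hiL mul1r.
have t0 : 0 < D / b by rewrite divr_gt0.
have := coco_aux (tau := D / b) L0 t0 _ _ gx gy.
rewrite -/b divfK ?gt_eqF //.
have h1 : L * (D / b) <= 1.
  by rewrite mulrA ler_pdivrMr // mul1r ltW.
move=> /(_ h1 (lexx _)) H.
have : D < D by apply: le_lt_trans H yx.
by rewrite ltxx.
Qed.

End Abs2.

Section Spec.
Context {R : realType} {d : nat}.
Notation vec := 'rV[R]_d.
Implicit Types (u v w q x y z c g n : vec).

Lemma specnorm_le (G : vec -> vec) x (H : 'M[R]_d) (L D : R) :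
  0 <= L -> 0 < D -> has_jacobian G x H ->
  (forall y, enorm (y - x) < D -> enorm (G y - G x) <= L * enorm (y - x)) ->
  specnorm H <= L.
Proof.
move=> L0 D0 hJ hL; rewrite /specnorm; apply: ge_sup.
  by exists 0, 0; rewrite mul0mx enorm0; split => //; apply: ler01.
move=> _ [v [hv ->]].
apply/ler_addgt0Pr => e e0.
have [del [del0 Hd]] := hJ e e0.
set s := Num.min D del / 2.
have s0 : 0 < s by rewrite /s divr_gt0 // lt_min D0 del0.
have sD : s < D.
  have : Num.min D del <= D by rewrite ge_min lexx.
  rewrite /s; lra.
have sdel : s < del.
  have : Num.min D del <= del by rewrite ge_min lexx orbT.
  rewrite /s; lra.
set y := x + s *: v.
have yx : y - x = s *: v by rewrite /y addKv.
have nyx : enorm (y - x) = s * enorm v by rewrite yx enormZ gtr0_norm.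
have nv := enorm_ge0 v.
have hyx : enorm (y - x) < del by rewrite nyx; nra.
have hyx' : enorm (y - x) < D by rewrite nyx; nra.
have H1 := Hd y hyx.
have H2 := hL y hyx'.
rewrite yx -scalemxAl in H1.
have : enorm (s *: (v *m H)) <= enorm (G y - G x) + enorm (G y - G x - s *: (v *m H)).
  have := enormD (G y - G x) (- (G y - G x - s *: (v *m H))).
  rewrite enormN.
  have -> : G y - G x + - (G y - G x - s *: (v *m H)) = s *: (v *m H).
    by apply/rowP => i; rewrite !mxE; ring.
  by [].
rewrite enormZ gtr0_norm // => H3.
rewrite nyx in H2; rewrite enormZ gtr0_norm // in H1.
have : s * enorm (v *m H) <= s * (L + e).
  have sLe : 0 <= s * (L + e) by apply: mulr_ge0; lra.
  have := ler_wpM2r sLe hv.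
  have -> : enorm v * (s * (L + e)) = L * (s * enorm v) + e * (s * enorm v) by ring.
  lra.
by rewrite ler_pM2l.
Qed.

End Spec.

Lemma frac_le {R : realType} (a b c e : R) : 0 < c -> 0 < e -> a * e <= b * c -> a / c <= b / e.
Proof.
move=> c0 e0 h; rewrite ler_pdivrMr // mulrAC ler_pdivlMr //.
Qed.

Lemma minl {R : realType} (x y : R) : Num.min x y <= x.
Proof. by rewrite ge_min lexx. Qed.
Lemma minr {R : realType} (x y : R) : Num.min x y <= y.
Proof. by rewrite ge_min lexx orbT. Qed.

Unset Implicit Arguments.

Theorem lemma5 (R : realType) (gamma sigma : R) :
  0 < gamma -> gamma <= 1 -> 0 < sigma -> sigma <= 1 ->
  exists tau : R,
    forall (d : nat) (K : set 'rV[R]_d) (p : 'rV[R]_d),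
      convex_body0 K -> centrally_fat gamma K -> smooth_body sigma K ->
      forall (x : 'rV[R]_d) (G : 'rV[R]_d -> 'rV[R]_d) (H : 'M[R]_d),
        x != p -> twice_diff_at (scaling_dist K p) x G H ->
        enorm (G x) * enorm (x - p) <= tau * scaling_dist K p x /\
        specnorm H * enorm (x - p) ^+ 2 <= tau ^+ 2 * scaling_dist K p x.
Proof.
move=> g0 g1 s0 s1.
exists (6 / (gamma ^+ 2 * sigma)).
move=> d K p cb [r [r' [r0 [r'0 [Kr [Kr' hg]]]]]] sm x G H xp [[d1 [d10 Hg]] hJ].
set T := scaling_dist K p x.
have T0 : 0 < T := sd_pos r0 Kr r'0 Kr' xp.
have hxp : enorm (x - p) <= r' * T.
  by have := sd_gt0 r0 Kr r'0 Kr' xp; rewrite -/T ler_pdivrMr // mulrC.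
have grr : gamma * r' <= r by rewrite -ler_pdivlMr.
have xp0 : x - p != 0 by rewrite subr_eq0.
set u0 := (enorm (x - p))^-1 *: (x - p).
have nu0 : enorm u0 = 1.
  by rewrite /u0 enormZ gtr0_norm ?invr_gt0 ?enorm_gt0 // mulVf // gt_eqF // enorm_gt0.
have Kru : K (r *: u0).
  by apply: Kr; rewrite /cball /= subr0 enormZ nu0 mulr1 gtr0_norm.
have Kru' : K (- (r *: u0)).
  by apply: Kr; rewrite /cball /= subr0 enormN enormZ nu0 mulr1 gtr0_norm.
have rr' : r <= r'.
  by have := Kr' _ Kru; rewrite /cball /= subr0 enormZ nu0 mulr1 gtr0_norm.
have hdiam : 2 * r <= diam K.
  rewrite /diam; apply: ub_le_sup.
    exists (2 * r') => _ [a [b [Ka [Kb ->]]]].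
    apply: (le_trans (enormD _ _)); rewrite enormN.
    have := Kr' _ Ka; have := Kr' _ Kb; rewrite /cball /= !subr0; lra.
  exists (r *: u0), (- (r *: u0)); split => //; split => //.
  rewrite opprK -scalerDl enormZ nu0 mulr1 ger0_norm; lra.
set L := LL r r' sigma T.
have L0 : 0 < L := LL_gt0 r0 r'0 s0 T0.
set D := D0 r r' sigma T.
have D0p : 0 < D.
  rewrite /D /D0 lt_min; apply/andP; split.
    by apply: divr_gt0 => //; apply: mulr_gt0.
  by apply: divr_gt0 => //; apply: mulr_gt0.
have hx0 : enorm (x - x) < d1 by rewrite subrr enorm0.
have [dg [dg0 Hdg]] := Hg x hx0 1 ltr01.
set M := enorm (G x) + 1.
have M0 : 0 < M by rewrite /M ltr_wpDl // enorm_ge0.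
set Ds := Num.min d1 (Num.min dg (Num.min (T / (2 * M)) D)).
have TM0 : 0 < T / (2 * M) by rewrite divr_gt0 // mulr_gt0.
have Ds0 : 0 < Ds.
  rewrite /Ds lt_min d10 /= lt_min dg0 /= lt_min TM0 /=; exact: D0p.
have Dsd1 : Ds <= d1 by apply: minl.
have Dsdg : Ds <= dg by apply: le_trans (minr _ _) (minl _ _).
have DsTM : Ds <= T / (2 * M).
  by apply: le_trans (minr _ _) _; apply: le_trans (minr _ _) (minl _ _).
have DsD : Ds <= D.
  by apply: le_trans (minr _ _) _; apply: le_trans (minr _ _) (minr _ _).
have fy : forall y, enorm (y - x) < Ds -> T / 2 <= scaling_dist K p y.
  move=> y hy.
  have := Hdg y (lt_le_trans hy Dsdg); rewrite -/T mul1r => h1.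
  have h2 := CS (G x) (y - x).
  have h3 : M * enorm (y - x) < T / 2.
    rewrite mulrC -ltr_pdivlMr //.
    by apply: lt_le_trans hy _; apply: le_trans DsTM _; rewrite invfM mulrA.
  have h4 := ler_norm (- (scaling_dist K p y - T - edot (G x) (y - x))).
  rewrite normrN in h4.
  have h5 := ler_norm (- edot (G x) (y - x)); rewrite normrN in h5.
  move: h3; rewrite /M mulrDl mul1r; lra.
have good : forall y, enorm (y - x) < Ds ->
    goodpt (scaling_dist K p) L D y (G y) /\ enorm (G y) <= 1 / r.
  move=> y hy.
  have [n [hn [lo up]]] := quad cb r0 Kr r'0 Kr' s0 sm T0 hdiam (fy y hy).
  have gy := Hg y (lt_le_trans hy Dsd1).
  have -> : G y = n := grad_unique D0p (ltW L0) gy up.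
  by split => //; split.
have gx : goodpt (scaling_dist K p) L D x (G x) /\ enorm (G x) <= 1 / r.
  by apply: good; rewrite subrr enorm0.
have Lip : forall y, enorm (y - x) < Ds -> enorm (G y - G x) <= L * enorm (y - x).
  move=> y hy; have [gy _] := good y hy.
  by apply: (coco L0 D0p gx.1 gy); apply: lt_le_trans hy DsD.
have hS : specnorm H <= L := specnorm_le (ltW L0) Ds0 hJ Lip.
have hGx := gx.2.
have gs1 : gamma * sigma <= 1 by have := ler_pM (ltW g0) (ltW s0) g1 s1; rewrite mul1r.
have r'T0 : 0 <= r' * T by apply: mulr_ge0; apply: ltW.
split.
  have h1 : enorm (G x) * enorm (x - p) <= 1 / r * (r' * T).
    by apply: ler_pM => //; apply: enorm_ge0.
  apply: le_trans h1 _.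
  have -> : 1 / r * (r' * T) = (r' * T) / r by rewrite mul1r mulrC.
  have -> : 6 / (gamma ^+ 2 * sigma) * T = (6 * T) / (gamma ^+ 2 * sigma) by rewrite mulrAC.
  apply: frac_le => //; first by apply: mulr_gt0 => //; apply: exprn_gt0.
  have e1 : r' * T * (gamma ^+ 2 * sigma) = (gamma * r') * (gamma * sigma) * T by rewrite expr2; ring.
  rewrite e1.
  have e2 : (gamma * r') * (gamma * sigma) <= r * 1.
    by apply: ler_pM => //; apply: mulr_ge0; apply: ltW.
  have e3 : (gamma * r') * (gamma * sigma) * T <= r * 1 * T by rewrite ler_pM2r.
  apply: le_trans e3 _; rewrite mulr1 mulrC ler_pM2r //; lra.
have hX : enorm (x - p) ^+ 2 <= (r' * T) ^+ 2.
  by rewrite ler_sqr ?nnegrE ?enorm_ge0.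
have h1 : specnorm H * enorm (x - p) ^+ 2 <= L * (r' * T) ^+ 2.
  apply: le_trans (ler_wpM2r (sqr_ge0 _) hS) _.
  by apply: ler_wpM2l => //; apply: ltW.
apply: le_trans h1 _.
have -> : L * (r' * T) ^+ 2 = (4 * AA r r' ^+ 2 * r' ^+ 2 * T) / (sigma * r ^+ 4).
  by rewrite /L /LL; field; rewrite !gt_eqF.
have -> : (6 / (gamma ^+ 2 * sigma)) ^+ 2 * T = (36 * T) / (gamma ^+ 4 * sigma ^+ 2).
  by field; rewrite !gt_eqF.
apply: frac_le; first by apply: mulr_gt0 => //; apply: exprn_gt0.
  by apply: mulr_gt0; apply: exprn_gt0.
have hA : AA r r' ^+ 2 <= 9 * r' ^+ 2.
  have hA0 : 0 <= AA r r' by rewrite /AA; lra.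
  have hA1 : AA r r' <= 3 * r' by rewrite /AA; lra.
  have := ler_pM hA0 hA0 hA1 hA1; rewrite -expr2 => h; apply: le_trans h _.
  by rewrite expr2; lra.
have hg4 : (gamma * r') ^+ 4 <= r ^+ 4.
  by rewrite lerXn2r ?nnegrE ?mulr_ge0 //; apply: ltW.
have hs2 : sigma ^+ 2 <= sigma by rewrite expr2 ger_pMr.
have P0 : 0 <= 4 * r' ^+ 2 * T * (gamma ^+ 4 * sigma ^+ 2).
  by rewrite !mulr_ge0 ?exprn_ge0 //; apply: ltW.
have step1 : 4 * AA r r' ^+ 2 * r' ^+ 2 * T * (gamma ^+ 4 * sigma ^+ 2)
    <= 36 * T * sigma ^+ 2 * (gamma * r') ^+ 4.
  have := ler_wpM2r P0 hA.
  have -> : 36 * T * sigma ^+ 2 * (gamma * r') ^+ 4 =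
     9 * r' ^+ 2 * (4 * r' ^+ 2 * T * (gamma ^+ 4 * sigma ^+ 2)) by ring.
  have -> : 4 * AA r r' ^+ 2 * r' ^+ 2 * T * (gamma ^+ 4 * sigma ^+ 2) =
     AA r r' ^+ 2 * (4 * r' ^+ 2 * T * (gamma ^+ 4 * sigma ^+ 2)) by ring.
  by [].
apply: le_trans step1 _.
have Q0 : 0 <= 36 * T * sigma ^+ 2 by rewrite !mulr_ge0 ?exprn_ge0 //; apply: ltW.
apply: le_trans (ler_wpM2l Q0 hg4) _.
have Q1 : 0 <= 36 * T * r ^+ 4 by rewrite !mulr_ge0 ?exprn_ge0 //; apply: ltW.
have := ler_wpM2l Q1 hs2.
have -> : 36 * T * r ^+ 4 * sigma ^+ 2 = 36 * T * sigma ^+ 2 * r ^+ 4 by ring.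
have -> : 36 * T * r ^+ 4 * sigma = 36 * T * (sigma * r ^+ 4) by ring.
by [].
Qed.
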